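(* Let $m\ge1$ and let $P=(p_{ij})$ be an $m\times m$ real symmetric matrix such that (A1) $p_{ij}=p_{ji}\le0$ for $i\ne j$, and (A2) $0<r_1\le\bar p_i:=\sum_{j=1}^mp_{ij}\le r_2$ for every $i$, where $r_1,r_2$ are positive constants. For $\beta\in\mathbb{R}^m$, let $\alpha\in\mathbb{R}^m$ be the solution of $P\alpha=\beta$. Then for all $i\ne j$, $$|\alpha_i-\alpha_j|\le m(m-1)\frac{r_2}{r_1}\frac{|\beta|}{|p_{ij}|+r_1},$$ where $|\beta|=\max_i|\beta_i|$. *)

(* Defs.v *)
From mathcomp Require Import all_boot all_order all_algebra.
Set Implicit Arguments. Unset Strict Implicit. Unset Printing Implicit Defensive.
Import Order.TTheory GRing.Theory Num.Theory.
Local Open Scope ring_scope.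

Definition supnorm (R : realFieldType) (m : nat) (b : 'cV[R]_m) : R :=
  \big[Num.max/0]_(i < m) `|b i 0|.

(* Main.v *)
Require Import Defs.
From mathcomp Require Import all_boot all_order all_algebra.
From mathcomp Require Import ring lra zify.
Import Order.TTheory GRing.Theory Num.Theory.
Local Open Scope ring_scope.

Lemma supnorm_ge (R : realFieldType) m (b : 'cV[R]_m) k : `|b k 0| <= supnorm b.
Proof. exact: le_bigmax. Qed.

Lemma supnormN (R : realFieldType) m (b : 'cV[R]_m) : supnorm (- b) = supnorm b.
Proof. by apply: eq_bigr => i _; rewrite mxE normrN. Qed.

Lemma roweq (R : realFieldType) m (P : 'M[R]_m) (beta alpha : 'cV[R]_m)
  (hsol : P *m alpha = beta) k :
  beta k 0 - (\sum_(l < m) P k l) * alpha k 0 = \sum_(l < m) P k l * (alpha l 0 - alpha k 0).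
Proof.
by rewrite -hsol mxE big_distrl -sumrB; apply: eq_bigr => l _; rewrite mulrBr.
Qed.

Lemma minprin (R : realFieldType) (m : nat)
  (P : 'M[R]_m) (r1 : R) (hr1 : 0 < r1)
  (A1 : forall i j : 'I_m, i != j -> P i j <= 0)
  (A2 : forall i : 'I_m, r1 <= \sum_(j < m) P i j)
  (beta alpha : 'cV[R]_m) (hsol : P *m alpha = beta) k :
  - supnorm beta <= r1 * alpha k 0.
Proof.
case: (arg_minP (fun k => alpha k 0) (erefl (predT k))) => k0 _ Hmin.
have H1 : beta k0 0 - (\sum_(l < m) P k0 l) * alpha k0 0 <= 0.
  rewrite roweq //; apply: sumr_le0 => l _.
  have [->|ne] := eqVneq l k0; first by rewrite subrr mulr0.
  apply: mulr_le0_ge0; first by apply: A1; rewrite eq_sym.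
  by rewrite subr_ge0; apply: Hmin.
have H2 := @supnorm_ge _ _ beta k0.
have H3 : alpha k0 0 <= alpha k 0 by apply: Hmin.
have H4 := A2 k0.
set s := \sum_(l < m) P k0 l in H1 H4.
have [hp|hn] := lerP 0 (alpha k0 0).
  move: H2; rewrite ler_norml => /andP[H2a H2b]; nra.
have : s * alpha k0 0 <= r1 * alpha k0 0 by nra.
move: H2; rewrite ler_norml => /andP[H2a H2b]; nra.
Qed.

Lemma core (R : realFieldType) (m : nat)
  (P : 'M[R]_m) (r1 : R) (hr1 : 0 < r1)
  (Psym : P^T = P)
  (A1 : forall i j : 'I_m, i != j -> P i j <= 0)
  (A2 : forall i : 'I_m, r1 <= \sum_(j < m) P i j)
  (beta alpha : 'cV[R]_m) (hsol : P *m alpha = beta) i j :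
  alpha j 0 < alpha i 0 -> 0 <= alpha i 0 ->
  (`|P i j| + r1) * (alpha i 0 - alpha j 0) <= m%:R * supnorm beta.
Proof.
move=> hji hi0.
have ij : i != j by apply: contraTneq hji => ->; rewrite ltxx.
set S := [set k | alpha i 0 <= alpha k 0].
have iS : i \in S by rewrite inE.
have jS : j \notin S by rewrite inE -ltNge.
pose f k l := P k l * (alpha l 0 - alpha k 0).
have cut : \sum_(k in S) (beta k 0 - (\sum_(l < m) P k l) * alpha k 0) =
   \sum_(k in S) \sum_(l | l \notin S) f k l.
  have E : forall k, \sum_(l < m) f k l = \sum_(l in S) f k l + \sum_(l | l \notin S) f k l.
    by move=> k; rewrite (bigID (fun l => l \in S)) /=.
  under eq_bigr do rewrite roweq // -/(f _ _) E.
  rewrite big_split /=.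
  set Y := (X in X + _).
  suff -> : Y = 0 by rewrite add0r.
  have : Y = - Y.
    rewrite /Y {1}exchange_big /= -sumrN; apply: eq_bigr => l _.
    rewrite -sumrN; apply: eq_bigr => k _.
    rewrite /f -{1}Psym mxE; ring.
  lra.
have fnn : forall k l, k \in S -> l \notin S -> 0 <= f k l.
  move=> k l kS lS; apply: mulr_le0.
    by apply: A1; apply: contraNneq lS => <-.
  move: kS lS; rewrite !inE -ltNge => kS lS; rewrite subr_le0.
  exact: ltW (lt_le_trans lS kS).
have lower : `|P i j| * (alpha i 0 - alpha j 0) <= \sum_(k in S) \sum_(l | l \notin S) f k l.
  rewrite (bigD1 i) //= (bigD1 j) //=.
  have h1 : 0 <= \sum_(l | (l \notin S) && (l != j)) f i l.
    by apply: sumr_ge0 => l /andP[lS _]; apply: fnn.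
  have h2 : 0 <= \sum_(k in S | k != i) \sum_(l | l \notin S) f k l.
    by apply: sumr_ge0 => k /andP[kS _]; apply: sumr_ge0 => l lS; apply: fnn.
  have h3 : `|P i j| * (alpha i 0 - alpha j 0) = f i j.
    by rewrite /f ler0_norm ?A1 //; ring.
  lra.
set c := supnorm beta - r1 * alpha i 0.
have upper : \sum_(k in S) (beta k 0 - (\sum_(l < m) P k l) * alpha k 0) <= c *+ #|S|.
  rewrite -sumr_const; apply: ler_sum => k kS.
  have := @supnorm_ge _ _ beta k; rewrite ler_norml => /andP[_ hb].
  have hk := A2 k.
  move: kS; rewrite inE => hk2.
  rewrite /c; nra.
set n := #|S| in upper.
have n0 : (0 < n)%N by apply/card_gt0P; exists i.
have nm : (n.+1 <= m)%N.
  have := cardsC S; rewrite card_ord => <-.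
  rewrite -addn1 leq_add2l; apply/card_gt0P; exists j; by rewrite inE.
have n1 : 1 <= n%:R :> R by rewrite ler1n.
have nmR : n%:R + 1 <= m%:R :> R by rewrite natr1 ler_nat.
have hb := @minprin _ _ _ _ hr1 A1 A2 _ _ hsol j.
rewrite -mulr_natr in upper.
rewrite -cut in lower.
have c0 : 0 <= c.
  have : 0 <= c * n%:R.
    apply: le_trans upper; apply: le_trans lower.
    by apply: mulr_ge0; rewrite ?normr_ge0 // subr_ge0 ltW.
  by rewrite pmulr_lge0 // (lt_le_trans ltr01).
have : c * n%:R <= c * (m%:R - 1) by apply: ler_wpM2l => //; lra.
move=> hc; rewrite /c in upper hc c0.
have h : 0 <= (m%:R - 2) * (r1 * alpha i 0).
  by apply: mulr_ge0; [lra | apply: mulr_ge0 => //; exact: ltW].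
lra.
Qed.

Theorem proposition2p1 (R : realFieldType) (m : nat) (hm : (0 < m)%N)
  (P : 'M[R]_m) (r1 r2 : R) (hr1 : 0 < r1) (hr2 : 0 < r2)
  (Psym : P^T = P)
  (A1 : forall i j : 'I_m, i != j -> P i j <= 0)
  (A2 : forall i : 'I_m, r1 <= \sum_(j < m) P i j <= r2)
  (beta alpha : 'cV[R]_m) (hsol : P *m alpha = beta) :
  forall i j : 'I_m, i != j ->
    `|alpha i 0 - alpha j 0| <=
      (m * (m - 1))%:R * (r2 / r1) * (supnorm beta / (`|P i j| + r1)).
Proof.
have A2' : forall i : 'I_m, r1 <= \sum_(j < m) P i j by move=> i; case/andP: (A2 i).
have PS : forall a b, P a b = P b a by move=> a b; rewrite -{1}Psym mxE.
have s0 : 0 <= supnorm beta.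
  by apply: le_trans (@supnorm_ge _ _ beta (Ordinal hm)); apply: normr_ge0.
have K : forall i j, i != j ->
    (`|P i j| + r1) * `|alpha i 0 - alpha j 0| <= m%:R * supnorm beta.
  move=> i j; wlog h : i j / alpha j 0 <= alpha i 0.
    move=> H ij; case/orP: (le_total (alpha j 0) (alpha i 0)) => hle; first exact: H hle ij.
    by rewrite PS distrC; apply: H; [exact: hle | rewrite eq_sym].
  move=> ij; rewrite [`|alpha i 0 - _|]ger0_norm ?subr_ge0 //.
  have [heq|lt] := eqVneq (alpha j 0) (alpha i 0).
    by rewrite heq subrr mulr0; apply: mulr_ge0.
  have lt' : alpha j 0 < alpha i 0 by rewrite lt_neqAle lt h.
  have [a0|a0] := lerP 0 (alpha i 0).
    exact: (@core _ _ _ _ hr1 Psym A1 A2' _ _ hsol).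
  have hsol' : P *m (- alpha) = - beta by rewrite mulmxN hsol.
  have := @core _ _ _ _ hr1 Psym A1 A2' _ _ hsol' j i.
  rewrite !mxE supnormN PS.
  have -> : - alpha j 0 - - alpha i 0 = alpha i 0 - alpha j 0 by ring.
  apply; [lra | lra].
move=> i j ij.
have r12 : r1 <= r2 by case/andP: (A2 i) => h1 h2; exact: le_trans h2.
have d0 : 0 < `|P i j| + r1 by apply: ltr_wpDl.
have e : `|alpha i 0 - alpha j 0| <= m%:R * (supnorm beta / (`|P i j| + r1)).
  by rewrite mulrA ler_pdivlMr // mulrC K.
apply: le_trans e _.
have m2 : (0 < m - 1)%N.
  rewrite subn_gt0; apply: contraNT ij; rewrite -leqNgt => m1.
  apply/eqP/val_inj => /=; have := ltn_ord i; have := ltn_ord j; lia.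
have M1 : 1 <= (m - 1)%:R :> R by rewrite ler1n.
have q1 : 1 <= r2 / r1 by rewrite ler_pdivlMr // mul1r.
set t := supnorm beta / (`|P i j| + r1).
have t0 : 0 <= t by apply: divr_ge0 => //; exact: ltW.
have M0 : 0 <= m%:R :> R by apply: ler0n.
have hq : 1 <= (m - 1)%:R * (r2 / r1) by nra.
have hh : 0 <= m%:R * t * ((m - 1)%:R * (r2 / r1) - 1).
  by apply: mulr_ge0; [apply: mulr_ge0 | lra].
rewrite natrM; lra.
Qed.
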